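(* Let $N$ be a phylogenetic network on $X\subseteq[n]$ and let $i,j\in[n]$ be distinct. Then $(i,j)$ is reducible in $N$ (i.e. is a cherry or a reticulated-cherry of $N$) if and only if $(i,j)$ is reducible in $\boldsymbol\mu(N)$ (i.e. is a cherry or a reticulated-cherry of the multiset $\boldsymbol\mu(N)$).
   Context: A (binary) phylogenetic network on a finite set $X\subseteq[n]=\{1,\dots,n\}$ is a directed acyclic graph $N=(V,A)$ without parallel arcs in which every node is exactly one of: the root (indegree 0, outdegree 1; there is exactly one), a leaf (indegree 1, outdegree 0), a tree node (indegree 1, outdegree 2), or a reticulation (indegree 2, outdegree 1); the leaves are identified with the elements of $X$. $V_T(N)$ denotes the set of leaves and tree nodes, $V_H(N)$ the set of reticulations. $m(u,v)$ is the number of directed paths from $u$ to $v$ (trivial paths allowed). Extended $\mu$-vectors: $\mu_i(u)=m(u,i)$ for $i\in[n]$ (0 if $i\notin X$), $\mu_0(u)=\sum_{h\in V_H(N)} m(u,h)$, $\mu(u)=(\mu_0(u),\dots,\mu_n(u))$; $\boldsymbol\mu(N)$ is the multiset $\{\mu(u)\mid u\in V_T(N)\}$. $\delta_S$ is the 0/1 indicator vector of $S\subseteq\{0,\dots,n\}$ and $\delta_{j_1,\dots,j_k}=\delta_{\{j_1,\dots,j_k\}}$. For distinct leaves $i,j$ of $N$ with parents $p_i,p_j$, $(i,j)$ is a cherry of $N$ if $p_i=p_j$, and a reticulated-cherry of $N$ if $p_i$ is a reticulation, $p_j$ is a tree node and $p_j$ is a parent of $p_i$. For a finite multiset $\boldsymbol\mu$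 of vectors of nonnegative integers indexed by $0,\dots,n$ and distinct $i,j\in[n]$, $(i,j)$ is a cherry of $\boldsymbol\mu$ if $\delta_{i,j}$ belongs to $\boldsymbol\mu$ with multiplicity exactly 1 and every element $\mu$ of $\boldsymbol\mu$ other than $\delta_i,\delta_j$ satisfies $\mu_i=\mu_j$; $(i,j)$ is a reticulated-cherry of $\boldsymbol\mu$ if $\delta_{0,i,j}$ belongs to $\boldsymbol\mu$ with multiplicity exactly 1 and every element $\mu$ of $\boldsymbol\mu$ other than $\delta_i,\delta_j$ satisfies $\mu_0\ge\mu_i\ge\mu_j$. *)

(* Defs.v *)
From mathcomp Require Import all_boot.
Set Implicit Arguments. Unset Strict Implicit. Unset Printing Implicit Defensive.

Section Network.
Variables (V : finType) (A : rel V) (lab : V -> nat).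

Definition indeg (v : V) : nat := #|[set u | A u v]|.
Definition outdeg (v : V) : nat := #|[set w | A v w]|.

Definition is_root (v : V) : bool := (indeg v == 0) && (outdeg v == 1).
Definition is_leaf (v : V) : bool := (indeg v == 1) && (outdeg v == 0).
Definition is_tree (v : V) : bool := (indeg v == 1) && (outdeg v == 2).
Definition is_ret  (v : V) : bool := (indeg v == 2) && (outdeg v == 1).

Definition acyclic : Prop := forall u v : V, A u v -> ~~ connect A v u.

(* (V, A) with leaf labelling lab is a binary phylogenetic network on a set
   X ⊆ [n] = {1..n}; X is the set of labels of the leaves. *)
Definition is_network (n : nat) : Prop :=
  [/\ acyclic,
      forall v, [|| is_root v, is_leaf v, is_tree v | is_ret v],
      #|[set v | is_root v]| = 1,
      forall v, is_leaf v -> 1 <= lab v <= n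
    & {in is_leaf &, injective lab}].

(* m(u,v): number of directed paths from u to v (trivial path allowed).
   A path with k arcs is a k-tuple of successive nodes; in a DAG every
   path has fewer than #|V| arcs. *)
Definition npaths (u v : V) : nat :=
  \sum_(k < #|V|) #|[set t : k.-tuple V | path A u t && (last u t == v)]|.

Definition mu_vec (n : nat) (u : V) : {ffun 'I_n.+1 -> nat} :=
  [ffun k : 'I_n.+1 =>
     if (k : nat) == 0 then \sum_(h | is_ret h) npaths u h
     else \sum_(w | is_leaf w && (lab w == k)) npaths u w].

Definition is_VT (v : V) : bool := is_leaf v || is_tree v.

Definition mu_net (n : nat) : seq {ffun 'I_n.+1 -> nat} :=
  [seq mu_vec n u | u <- enum is_VT].

Definition net_cherry (i j : nat) : Prop :=
  exists vi vj p,
    [/\ is_leaf vi, lab vi = i, is_leaf vj & lab vj = j] /\ A p vi /\ A p vj.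

Definition net_ret_cherry (i j : nat) : Prop :=
  exists vi vj pi pj,
    [/\ is_leaf vi, lab vi = i, is_leaf vj & lab vj = j] /\
    [/\ A pi vi, A pj vj, is_ret pi, is_tree pj & A pj pi].

Definition net_reducible (i j : nat) : Prop :=
  net_cherry i j \/ net_ret_cherry i j.

End Network.

Definition delta (n : nat) (S : seq nat) : {ffun 'I_n.+1 -> nat} :=
  [ffun k : 'I_n.+1 => nat_of_bool ((k : nat) \in S)].

Section Multiset.
Variables (n : nat) (s : seq {ffun 'I_n.+1 -> nat}).

Definition ms_cherry (i j : nat) : Prop :=
  count_mem (delta n [:: i; j]) s = 1 /\
  forall x, x \in s -> x != delta n [:: i] -> x != delta n [:: j] ->
    x (inord i) = x (inord j).

Definition ms_ret_cherry (i j : nat) : Prop :=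
  count_mem (delta n [:: 0; i; j]) s = 1 /\
  forall x, x \in s -> x != delta n [:: i] -> x != delta n [:: j] ->
    x (inord i) <= x ord0 /\ x (inord j) <= x (inord i).

Definition ms_reducible (i j : nat) : Prop :=
  ms_cherry i j \/ ms_ret_cherry i j.

End Multiset.

(* Main.v *)
Require Import Defs.
From mathcomp Require Import all_boot zify.
Set Implicit Arguments. Unset Strict Implicit. Unset Printing Implicit Defensive.

Section Count.
Variables (V : finType) (A : rel V).

Definition Pk k (u v : V) := #|[set t : k.-tuple V | path A u t && (last u t == v)]|.

Lemma Pk_sum k u v : Pk k u v = \sum_(t : k.-tuple V) (path A u t && (last u t == v)).
Proof.
rewrite /Pk -sum1_card big_mkcond /=; apply: eq_bigr => t _.
by rewrite inE; case: (_ && _).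
Qed.

Lemma Pk0 u v : Pk 0 u v = (u == v).
Proof.
rewrite Pk_sum (big_pred1 [tuple]) //= => t.
by rewrite /= (tuple0 t) /= eq_refl.
Qed.

Lemma sum_cons k (F : k.+1.-tuple V -> nat) :
  \sum_t F t = \sum_(w : V) \sum_(t : k.-tuple V) F (cons_tuple w t).
Proof.
rewrite pair_big /=.
rewrite (reindex (fun p : V * k.-tuple V => cons_tuple p.1 p.2)) //=.
exists (fun t => (thead t, behead_tuple t)) => [[x t] _|t _] /=.
  by congr pair; apply: val_inj.
by rewrite [RHS]tuple_eta.
Qed.

Lemma sum_rcons k (F : k.+1.-tuple V -> nat) :
  \sum_t F t = \sum_(t : k.-tuple V) \sum_(w : V) F (rcons_tuple t w).
Proof.
rewrite pair_big /=.
rewrite (reindex (fun p : k.-tuple V * V => rcons_tuple p.1 p.2)) //=.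
exists (fun t => (belast_tuple (thead t) (behead_tuple t), last (thead t) (behead t)))
  => [[t x] _|t _] /=.
  have E: thead (rcons_tuple t x) :: behead (rcons_tuple t x) = rcons t x.
    by rewrite -[RHS]/(val (rcons_tuple t x)) [in RHS](tuple_eta (rcons_tuple t x)).
  have := lastI (thead (rcons_tuple t x)) (behead (rcons_tuple t x)).
  rewrite E => /rcons_inj [] E1 E2.
  congr pair; last by rewrite -E2.
  by apply: val_inj => /=; rewrite -E1.
apply: val_inj => /=; rewrite -lastI.
by rewrite -[LHS]/(val [tuple of thead t :: behead t]) -tuple_eta.
Qed.

Lemma sum_b_eq (b : pred V) v : \sum_(w : V) (b w && (w == v)) = b v.
Proof.
rewrite (bigD1 v) //= eqxx andbT big1 ?addn0 // => w /negbTE ->.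
by rewrite andbF.
Qed.

Lemma PkS k u v : Pk k.+1 u v = \sum_(w | A u w) Pk k w v.
Proof.
rewrite Pk_sum sum_cons [RHS]big_mkcond /=; apply: eq_bigr => w _.
rewrite Pk_sum; case: (A u w) => /=; first by [].
by rewrite big1.
Qed.

Lemma PkSr k u v : Pk k.+1 u v = \sum_(w | A w v) Pk k u w.
Proof.
rewrite Pk_sum sum_rcons.
transitivity (\sum_(t : k.-tuple V) (path A u t && A (last u t) v)).
  apply: eq_bigr => t _; rewrite -(sum_b_eq (fun w => path A u t && A (last u t) w)).
  by apply: eq_bigr => w _; rewrite /= rcons_path last_rcons.
under [RHS]eq_bigr => w _ do rewrite Pk_sum.
rewrite (exchange_big_dep xpredT) //=; apply: eq_bigr => t _.
rewrite big_mkcond /= (bigD1 (last u t)) //= eqxx andbT big1 ?addn0.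
  by case: (A _ v); case: (path _ _ _).
by move=> w Hw; rewrite eq_sym (negbTE Hw) andbF; case: (A w v).
Qed.

Hypothesis acyc : forall u v, A u v -> ~~ connect A v u.

Lemma path_uniq x t : path A x t -> uniq (x :: t).
Proof.
elim: t x => [|y t IH] x //= /andP[Axy Hp].
have := IH _ Hp => /= ->; rewrite andbT.
apply/negP => Hx.
have := path_connect Hp Hx.
by move/negP: (acyc Axy).
Qed.

Lemma path_size x t : path A x t -> size t < #|V|.
Proof.
move/path_uniq/card_uniqP => H.
have := max_card (mem (x :: t)).
by rewrite H.
Qed.

Lemma Pk_big k u v : #|V| <= k -> Pk k u v = 0.
Proof.
move=> Hk; rewrite Pk_sum big1 // => t _.
case Hp: (path A u t) => //=.
have := path_size Hp; rewrite size_tuple => H.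
by move: (leq_trans H Hk); rewrite ltnn.
Qed.

Lemma npathsE u v : npaths A u v = \sum_(k < #|V|) Pk k u v.
Proof. by []. Qed.

Lemma npathsN N u v : #|V| <= N -> npaths A u v = \sum_(k < N) Pk k u v.
Proof.
move=> HN; rewrite npathsE -!(big_mkord xpredT (fun k => Pk k u v)).
rewrite (@big_cat_nat _ _ _ #|V| 0 N _ _ (leq0n _) HN) /= [X in _ = _ + X]big_nat_cond [X in _ = _ + X]big1 ?addn0 //.
by move=> k /andP[/andP[Hk _] _]; apply: Pk_big.
Qed.

Lemma m_rec u v : npaths A u v = (u == v) + \sum_(w | A u w) npaths A w v.
Proof.
rewrite (npathsN u v (leqnSn _)) -(big_mkord xpredT (fun k => Pk k u v)).
rewrite big_nat_recl // Pk0; congr addn.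
under eq_bigr => k _ do rewrite PkS.
rewrite exchange_big /=; apply: eq_bigr => w _.
by rewrite npathsE big_mkord.
Qed.

Lemma m_recr u v : npaths A u v = (u == v) + \sum_(w | A w v) npaths A u w.
Proof.
rewrite (npathsN u v (leqnSn _)) -(big_mkord xpredT (fun k => Pk k u v)).
rewrite big_nat_recl // Pk0; congr addn.
under eq_bigr => k _ do rewrite PkSr.
rewrite exchange_big /=; apply: eq_bigr => w _.
by rewrite npathsE big_mkord.
Qed.

Lemma m_pos u v : (0 < npaths A u v) = connect A u v.
Proof.
apply/idP/idP.
  rewrite npathsE => H.
  case: (pickP (fun k : 'I_#|V| => 0 < Pk k u v)) => [k Hk | H0]; last first.
    by move: H; rewrite big1 // => k _; move: (H0 k) => /= /negbT; rewrite lt0n negbK => /eqP.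
  move/card_gt0P: Hk => [t]; rewrite inE => /andP[Hp /eqP <-].
  by apply/connectP; exists t.
move/connectP => [p Hp ->].
have Hs := path_size Hp.
rewrite npathsE (bigD1 (Ordinal Hs)) //= ltn_addr //.
apply/card_gt0P; exists (in_tuple p); by rewrite inE Hp eqxx.
Qed.

End Count.

Section WF.
Variables (V : finType) (e : rel V).
Hypothesis acyc : forall u v, e u v -> ~~ connect e v u.

Lemma wf_ind (P : V -> Prop) :
  (forall x, (forall y, e x y -> P y) -> P x) -> forall x, P x.
Proof.
move=> H.
suff: forall k x, (forall t, path e x t -> size t < k) -> P x.
  by move=> S x; apply: (S #|V|) => t; apply: path_size.
elim=> [|k IH] x Hx; first by have := Hx [::] isT.
apply: H => y Hy; apply: IH => t Ht.
by have := Hx (y :: t); rewrite /= Hy Ht; apply.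
Qed.
End WF.

Section Net.
Variables (V : finType) (A : rel V) (lab : V -> nat) (n : nat).
Hypothesis HN : is_network A lab n.
Local Notation m := (npaths A).

Lemma acyc : forall u v, A u v -> ~~ connect A v u. Proof. by case: HN. Qed.
Lemma kinds v : [|| is_root A v, is_leaf A v, is_tree A v | is_ret A v].
Proof. by case: HN => _ H _ _ _; apply: H. Qed.
Lemma labr v : is_leaf A v -> 1 <= lab v <= n. Proof. by case: HN => _ _ _ H _; apply: H. Qed.
Lemma lab_inj : {in is_leaf A &, injective lab}. Proof. by case: HN. Qed.
Lemma root1 : #|[set v | is_root A v]| = 1. Proof. by case: HN. Qed.

Lemma mycard0P (P : pred V) : #|[set x | P x]| = 0 -> forall x, P x = false.
Proof.
move=> H x; apply/negbTE/negP => Px.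
have : x \in [set x | P x] by rewrite inE.
by rewrite (cards0_eq H) inE.
Qed.
Lemma mycard1P (P : pred V) : #|[set x | P x]| = 1 -> exists c, forall x, P x = (x == c).
Proof. by move/eqP/cards1P => [c Hc]; exists c => x; rewrite -in_set1 -Hc inE. Qed.
Lemma mycard2P (P : pred V) : #|[set x | P x]| = 2 ->
  exists c1 c2, c1 != c2 /\ forall x, P x = (x == c1) || (x == c2).
Proof.
move/eqP/cards2P => [c1 [c2 [Hne Hc]]]; exists c1, c2; split=> // x.
by rewrite -in_set2 -Hc inE.
Qed.

Lemma leaf_out v w : is_leaf A v -> A v w = false.
Proof. by case/andP=> _ /eqP H; apply: (mycard0P H). Qed.
Lemma leaf_par v : is_leaf A v -> exists p, forall u, A u v = (u == p).
Proof. by case/andP=> /eqP H _; apply: mycard1P H. Qed.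
Lemma tree_ch v : is_tree A v ->
  exists c1 c2, c1 != c2 /\ forall w, A v w = (w == c1) || (w == c2).
Proof. by case/andP=> _ /eqP H; apply: mycard2P H. Qed.
Lemma tree_par v : is_tree A v -> exists p, forall u, A u v = (u == p).
Proof. by case/andP=> /eqP H _; apply: mycard1P H. Qed.
Lemma ret_ch v : is_ret A v -> exists c, forall w, A v w = (w == c).
Proof. by case/andP=> _ /eqP H; apply: mycard1P H. Qed.
Lemma ret_par v : is_ret A v ->
  exists p1 p2, p1 != p2 /\ forall u, A u v = (u == p1) || (u == p2).
Proof. by case/andP=> /eqP H _; apply: mycard2P H. Qed.
Lemma root_ch v : is_root A v -> exists c, forall w, A v w = (w == c).
Proof. by case/andP=> _ /eqP H; apply: mycard1P H. Qed.
Lemma root_par v u : is_root A v -> A u v = false.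
Proof. by case/andP=> /eqP H _; apply: (mycard0P H). Qed.

Ltac kd H := move: H; rewrite /is_root /is_leaf /is_tree /is_ret;
  case/andP => /eqP -> /eqP ->.
Lemma tree_nleaf v : is_tree A v -> is_leaf A v = false. Proof. by move=> H; kd H. Qed.
Lemma tree_nret v : is_tree A v -> is_ret A v = false. Proof. by move=> H; kd H. Qed.
Lemma tree_nroot v : is_tree A v -> is_root A v = false. Proof. by move=> H; kd H. Qed.
Lemma leaf_nret v : is_leaf A v -> is_ret A v = false. Proof. by move=> H; kd H. Qed.
Lemma leaf_nroot v : is_leaf A v -> is_root A v = false. Proof. by move=> H; kd H. Qed.
Lemma leaf_ntree v : is_leaf A v -> is_tree A v = false. Proof. by move=> H; kd H. Qed.
Lemma ret_nroot v : is_ret A v -> is_root A v = false. Proof. by move=> H; kd H. Qed.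
Lemma ret_ntree v : is_ret A v -> is_tree A v = false. Proof. by move=> H; kd H. Qed.
Lemma ret_nleaf v : is_ret A v -> is_leaf A v = false. Proof. by move=> H; kd H. Qed.

Lemma sum2 (P : pred V) c1 c2 (F : V -> nat) : c1 != c2 ->
  (forall x, P x = (x == c1) || (x == c2)) -> \sum_(x | P x) F x = F c1 + F c2.
Proof.
move=> Hne HP.
rewrite (bigD1 c1) ?HP ?eqxx //= (bigD1 c2) /=; last by rewrite HP eqxx orbT eq_sym.
rewrite big1 ?addn0 // => x /andP[/andP[]]; rewrite HP.
by case/orP=> /eqP ->; rewrite ?eqxx.
Qed.

Lemma sum1 (P : pred V) c (F : V -> nat) :
  (forall x, P x = (x == c)) -> \sum_(x | P x) F x = F c.
Proof. by move=> HP; apply: big_pred1 => x; rewrite HP. Qed.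

Lemma sum_ind (P : pred V) y : \sum_(w | P w) (y == w) = P y.
Proof.
rewrite big_mkcond (bigD1 y) //= eqxx big1 ?addn0; first by case: (P y).
by move=> w; rewrite eq_sym => /negbTE ->; case: (P w).
Qed.

Lemma m_leaf v w : is_leaf A v -> m v w = (v == w).
Proof.
move=> Hv; rewrite (m_rec acyc) big_pred0 ?addn0 // => x.
exact: leaf_out.
Qed.

Lemma m_two v c1 c2 w : c1 != c2 -> (forall x, A v x = (x == c1) || (x == c2)) ->
  m v w = (v == w) + m c1 w + m c2 w.
Proof. by move=> Hne HP; rewrite (m_rec acyc) (sum2 _ Hne HP) addnA. Qed.

Lemma m_one v c w : (forall x, A v x = (x == c)) -> m v w = (v == w) + m c w.
Proof. by move=> HP; rewrite (m_rec acyc) (sum1 _ HP). Qed.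

Lemma mr_one u w p : (forall x, A x w = (x == p)) -> m u w = (u == w) + m u p.
Proof. by move=> HP; rewrite (m_recr acyc) (sum1 _ HP). Qed.

Lemma mr_two u w p1 p2 : p1 != p2 -> (forall x, A x w = (x == p1) || (x == p2)) ->
  m u w = (u == w) + m u p1 + m u p2.
Proof. by move=> Hne HP; rewrite (m_recr acyc) (sum2 _ Hne HP) addnA. Qed.

Lemma mpos u v : (0 < m u v) = connect A u v.
Proof. exact: (m_pos acyc). Qed.

Lemma conn_leaf v w : is_leaf A v -> connect A v w -> w = v.
Proof. by move=> Hv; rewrite -mpos m_leaf // lt0b => /eqP. Qed.

Lemma has_child v : ~~ is_leaf A v -> exists c, A v c.
Proof.
move=> Hv; case/or4P: (kinds v) => Hk.
- by have [c Hc] := root_ch Hk; exists c; rewrite Hc.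
- by rewrite Hk in Hv.
- by have [c1 [c2 [_ Hc]]] := tree_ch Hk; exists c1; rewrite Hc eqxx.
- by have [c Hc] := ret_ch Hk; exists c; rewrite Hc.
Qed.

Lemma has_par v : ~~ is_root A v -> exists p, A p v.
Proof.
move=> Hv; case/or4P: (kinds v) => Hk.
- by rewrite Hk in Hv.
- by have [c Hc] := leaf_par Hk; exists c; rewrite Hc.
- by have [c Hc] := tree_par Hk; exists c; rewrite Hc.
- by have [c1 [c2 [_ Hc]]] := ret_par Hk; exists c1; rewrite Hc eqxx.
Qed.

Lemma reach_leaf x : exists2 w, is_leaf A w & connect A x w.
Proof.
move: x; apply: (wf_ind acyc) => x IH.
case: (boolP (is_leaf A x)) => Hx; first by exists x.
have [c Hc] := has_child Hx.
have [w Hw Hcw] := IH c Hc.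
by exists w => //; apply: connect_trans (connect1 Hc) Hcw.
Qed.

Lemma conn_step x y : connect A x y -> x != y -> exists2 c, A x c & connect A c y.
Proof.
move/connectP => [[|c p] /= Hp Hy]; first by rewrite Hy eqxx.
case/andP: Hp => Hxc Hp _; exists c => //; apply/connectP; by exists p.
Qed.

Lemma root_uniq r y : is_root A r -> is_root A y -> y = r.
Proof.
have [c Hc] := mycard1P root1.
by rewrite !Hc => /eqP -> /eqP ->.
Qed.

Lemma root_conn r y : is_root A r -> connect A r y.
Proof.
move=> Hr.
have acr : forall u v, [rel x y | A y x] u v -> ~~ connect [rel x y | A y x] v u.
  by move=> u v /= H; rewrite connect_rev /=; apply: acyc.
move: y; apply: (wf_ind acr) => y IH.
case: (boolP (is_root A y)) => Hy; first by rewrite (root_uniq Hr Hy) connect0.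
have [p Hp] := has_par Hy.
by apply: connect_trans (IH p Hp) (connect1 Hp).
Qed.

Lemma mu0 u : mu_vec A lab n u ord0 = \sum_(h | is_ret A h) m u h.
Proof. by rewrite ffunE. Qed.

Lemma muk u v : is_leaf A v -> mu_vec A lab n u (inord (lab v)) = m u v.
Proof.
move=> Hv; have /andP[H1 H2] := labr Hv.
rewrite ffunE inordK ?ltnS //.
have ->: (lab v == 0) = false by case: (lab v) H1.
apply: sum1 => w; apply/andP/eqP => [[Hw /eqP E]|->]; last by rewrite eqxx.
exact: lab_inj.
Qed.

Lemma mu_list u s : (forall w, m u w = \sum_(y <- s) (y == w)) ->
  forall k : 'I_n.+1, mu_vec A lab n u k =
   if (k : nat) == 0 then count (is_ret A) s
   else count (fun y => is_leaf A y && (lab y == k)) s.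
Proof.
move=> H k; rewrite ffunE; case: ifP => _;
  under eq_bigr => w _ do rewrite H;
  rewrite exchange_big /= -sum1_count [RHS]big_mkcond /=; apply: eq_bigr => y _;
  by rewrite sum_ind; case: ifP.
Qed.

Lemma delta_k S k : k <= n -> delta n S (inord k) = (k \in S).
Proof. by move=> Hk; rewrite ffunE inordK. Qed.
Lemma delta_0 S : delta n S ord0 = (0 \in S).
Proof. by rewrite ffunE. Qed.

Lemma mu_leaf_in u S w : mu_vec A lab n u = delta n S -> is_leaf A w ->
  connect A u w -> lab w \in S.
Proof.
move=> Hu Hw; have /andP[_ H2] := labr Hw.
by rewrite -mpos -(muk u Hw) Hu delta_k // lt0b.
Qed.

Lemma leaf_of_mu u k : 1 <= k <= n -> 0 < mu_vec A lab n u (inord k) ->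
  exists2 v, is_leaf A v & lab v = k.
Proof.
case/andP=> H1 H2; rewrite ffunE inordK ?ltnS //.
have ->: (k == 0) = false by case: k H1 H2.
case: (pickP (fun w => is_leaf A w && (lab w == k))) => [w /andP[Hw /eqP Hl]|H0].
  by exists w.
by rewrite big_pred0.
Qed.

Lemma count_mu1 S p : is_VT A p -> mu_vec A lab n p = delta n S ->
  (forall u, is_VT A u -> mu_vec A lab n u = delta n S -> u = p) ->
  count_mem (delta n S) (mu_net A lab n) = 1.
Proof.
move=> Hp Ep Hu; rewrite /mu_net count_map.
transitivity (count_mem p (enum (is_VT A))).
  apply: eq_in_count => u; rewrite mem_enum => Hv /=.
  by apply/eqP/eqP => [/(Hu _ Hv)|->].
rewrite count_uniq_mem ?enum_uniq // mem_enum.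
by rewrite -topredE /= Hp.
Qed.

Lemma in_mu_net x : x \in mu_net A lab n -> exists2 u, is_VT A u & x = mu_vec A lab n u.
Proof. by case/mapP=> u; rewrite mem_enum => Hu ->; exists u. Qed.

Lemma mu_in_net u : is_VT A u -> mu_vec A lab n u \in mu_net A lab n.
Proof. by move=> Hu; apply: map_f; rewrite mem_enum. Qed.

End Net.

Section Main.
Variables (V : finType) (A : rel V) (lab : V -> nat) (n : nat).
Hypothesis HN : is_network A lab n.
Variables (i j : nat).
Hypotheses (Hi : 1 <= i <= n) (Hj : 1 <= j <= n) (Hij : i != j).
Local Notation m := (npaths A).
Local Notation mu := (mu_vec A lab n).

Lemma pred1_fix (P : pred V) a : (exists c, forall x, P x = (x == c)) -> P a ->
  forall x, P x = (x == a).
Proof. by case=> c Hc; rewrite Hc => /eqP ->. Qed.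

Lemma pred2_fix (P : pred V) a :
  (exists c1 c2, c1 != c2 /\ forall x, P x = (x == c1) || (x == c2)) -> P a ->
  exists b, a != b /\ forall x, P x = (x == a) || (x == b).
Proof.
case=> c1 [c2 [Hne Hc]]; rewrite Hc => /orP[]/eqP ->.
  by exists c2; split.
by exists c1; split; [rewrite eq_sym | move=> x; rewrite Hc orbC].
Qed.

Lemma tree_ab v a b : is_tree A v -> A v a -> A v b -> a != b ->
  forall x, A v x = (x == a) || (x == b).
Proof.
move=> Hv Ha Hb Hab.
have [c [Hac Hc]] := pred2_fix (tree_ch Hv) Ha.
move: Hb; rewrite Hc; have -> : (b == a) = false by rewrite eq_sym (negbTE Hab).
by move=> /= /eqP E; subst b; exact: Hc.
Qed.

Lemma two_ch_tree v a b : A v a -> A v b -> a != b -> is_tree A v.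
Proof.
move=> Ha Hb Hab; case/or4P: (kinds HN v) => Hk //.
- have Hc := pred1_fix (root_ch Hk) Ha.
  by move: Hb; rewrite Hc => /eqP E; rewrite E eqxx in Hab.
- by rewrite (leaf_out a Hk) in Ha.
- have Hc := pred1_fix (ret_ch Hk) Ha.
  by move: Hb; rewrite Hc => /eqP E; rewrite E eqxx in Hab.
Qed.

Lemma nat_or (a b c : nat) : a != b -> (a == c) + ((b == c) + 0) = (c == a) || (c == b).
Proof.
move=> Hab; rewrite addn0 ![c == _]eq_sym.
case: (a =P c) => [Ea|Na]; case: (b =P c) => [Eb|Nb] //.
by rewrite Ea Eb eqxx in Hab.
Qed.

Lemma Hi0 : (0 == i) = false. Proof. by case: i Hi. Qed.
Lemma Hj0 : (0 == j) = false. Proof. by case: j Hj. Qed.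
Lemma Hin : i <= n. Proof. by case/andP: Hi. Qed.
Lemma Hjn : j <= n. Proof. by case/andP: Hj. Qed.

Lemma mu_leaf v : is_leaf A v -> mu v = delta n [:: lab v].
Proof.
move=> Hv; have /andP[H1 _] := labr HN Hv.
have mp : forall w, m v w = \sum_(y <- [:: v]) (y == w).
  by move=> w; rewrite big_seq1 (m_leaf HN).
apply/ffunP => k; rewrite (mu_list lab mp) ffunE /= (leaf_nret Hv) Hv /= inE.
case: ifP => [/eqP ->|_]; first by case: (lab v) H1.
by rewrite addn0 eq_sym.
Qed.

Lemma neq_kind u v : is_tree A u -> ~~ is_tree A v -> u != v.
Proof. by move=> Hu Hv; apply/eqP => E; rewrite -E Hu in Hv. Qed.

Lemma R_split x y1 y2 : (forall h, m x h = (x == h) + m y1 h + m y2 h) ->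
  \sum_(h | is_ret A h) m x h =
  is_ret A x + \sum_(h | is_ret A h) m y1 h + \sum_(h | is_ret A h) m y2 h.
Proof.
move=> H; under eq_bigr => h _ do rewrite H.
by rewrite !big_split /= sum_ind.
Qed.

Lemma R_one x y : (forall h, m x h = (x == h) + m y h) ->
  \sum_(h | is_ret A h) m x h = is_ret A x + \sum_(h | is_ret A h) m y h.
Proof.
move=> H; under eq_bigr => h _ do rewrite H.
by rewrite !big_split /= sum_ind.
Qed.

Lemma R_ge x h : is_ret A h -> m x h <= \sum_(h | is_ret A h) m x h.
Proof. by move=> Hh; rewrite (bigD1 h) //= leq_addr. Qed.

Lemma dirA : net_cherry A lab i j -> ms_cherry (mu_net A lab n) i j.
Proof.
case=> vi [vj [p [[Li Hli Lj Hlj] [Api Apj]]]].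
have Hvij : vi != vj by apply/eqP => E; move: Hij; rewrite -Hli -Hlj E eqxx.
have Pi := pred1_fix (leaf_par Li) Api.
have Pj := pred1_fix (leaf_par Lj) Apj.
have Tp := two_ch_tree Api Apj Hvij.
have Cp := tree_ab Tp Api Apj Hvij.
have mi : forall x, m x vi = (x == vi) + m x p := fun x => mr_one HN x Pi.
have mj : forall x, m x vj = (x == vj) + m x p := fun x => mr_one HN x Pj.
have mp : forall w, m p w = \sum_(y <- [:: p; vi; vj]) (y == w).
  by move=> w; rewrite (m_two HN w Hvij Cp) !(m_leaf HN) // !big_cons big_nil addn0 addnA.
have Ep : mu p = delta n [:: i; j].
  apply/ffunP => k; rewrite (mu_list lab mp) ffunE /=.
  rewrite (tree_nret Tp) (leaf_nret Li) (leaf_nret Lj) (tree_nleaf Tp) Li Lj Hli Hlj /=.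
  rewrite !inE; case: ifP => [/eqP ->|_]; first by rewrite Hi0 Hj0.
  exact: nat_or.
split.
  apply: (count_mu1 _ Ep); first by rewrite /is_VT Tp orbT.
  move=> u Hu Eu.
  have mui : m u vi = 1 by rewrite -(muk HN u Li) Eu Hli delta_k ?Hin // inE eqxx.
  have muj : m u vj = 1 by rewrite -(muk HN u Lj) Eu Hlj delta_k ?Hjn // !inE eqxx orbT.
  case/orP: Hu => Hu.
    rewrite !(m_leaf HN) // in mui muj.
    by move: mui muj; case: (u =P vi) => // Ei; case: (u =P vj) => // Ej; rewrite -Ei -Ej eqxx in Hvij.
  have [c1 [c2 [Hc Cu]]] := tree_ch Hu.
  have mup : m u p = 1.
    by move: mui; rewrite mi (negbTE (neq_kind Hu (negbT (leaf_ntree Li)))).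
  case: (eqVneq u p) => // Hup.
  have key : forall c, A u c -> 0 < m c p.
    move=> c Hc'; have [w Lw Hcw] := reach_leaf HN c.
    have Huw : connect A u w := connect_trans (connect1 Hc') Hcw.
    have := mu_leaf_in HN Eu Lw Huw; rewrite !inE -Hli -Hlj.
    case/orP=> /eqP El.
      have Ew := lab_inj HN Lw Li El; subst w.
      move: Hcw; rewrite -(mpos HN) // mi; case: (eqVneq c vi) => [Ec|] //=.
      by subst c; move: Hc'; rewrite Pi (negbTE Hup).
    have Ew := lab_inj HN Lw Lj El; subst w.
    move: Hcw; rewrite -(mpos HN) // mj; case: (eqVneq c vj) => [Ec|] //=.
    by subst c; move: Hc'; rewrite Pj (negbTE Hup).
  move: mup; rewrite (m_two HN p Hc Cu) (negbTE Hup) /=.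
  have := key c1; have := key c2; rewrite !Cu !eqxx orbT /= => K2 K1.
  have := K1 isT; have := K2 isT; lia.
move=> x /in_mu_net [u Hu ->] Hxi Hxj.
have uvi : u != vi by apply: contraNneq Hxi => ->; rewrite mu_leaf // Hli.
have uvj : u != vj by apply: contraNneq Hxj => ->; rewrite mu_leaf // Hlj.
by rewrite -{1}Hli -Hlj !muk // mi mj (negbTE uvi) (negbTE uvj).
Qed.


Lemma dirB : net_ret_cherry A lab i j -> ms_ret_cherry (mu_net A lab n) i j.
Proof.
case=> vi [vj [pi [pj [[Li Hli Lj Hlj] [Avi Avj Ri Tj Aji]]]]].
have Hvij : vi != vj by apply/eqP => E; move: Hij; rewrite -Hli -Hlj E eqxx.
have Pi := pred1_fix (leaf_par Li) Avi.
have Pj := pred1_fix (leaf_par Lj) Avj.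
have Hpv : pi != vj by apply/eqP => E; rewrite E (leaf_nret Lj) in Ri.
have Cj := tree_ab Tj Aji Avj Hpv.
have Ci := pred1_fix (ret_ch Ri) Avi.
have [q [Hq Qi]] := pred2_fix (ret_par Ri) Aji.
have mi : forall x, m x vi = (x == vi) + m x pi := fun x => mr_one HN x Pi.
have mj : forall x, m x vj = (x == vj) + m x pj := fun x => mr_one HN x Pj.
have mpi : forall x, m x pi = (x == pi) + m x pj + m x q := fun x => mr_two HN x Hq Qi.
have mp : forall w, m pj w = \sum_(y <- [:: pj; pi; vi; vj]) (y == w).
  move=> w; rewrite (m_two HN w Hpv Cj) (m_one HN w Ci) !(m_leaf HN) //.
  by rewrite !big_cons big_nil addn0 !addnA.
have Ep : mu pj = delta n [:: 0; i; j].
  apply/ffunP => k; rewrite (mu_list lab mp) ffunE /=.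
  rewrite (tree_nret Tj) Ri (leaf_nret Li) (leaf_nret Lj) (tree_nleaf Tj) (ret_nleaf Ri) Li Lj Hli Hlj /=.
  rewrite !inE; case: ifP => [/eqP ->|_] //=.
  exact: nat_or.
have upi : forall u, is_VT A u -> u != pi.
  by move=> u Hu; apply/eqP => E; move: Hu; rewrite E /is_VT (ret_nleaf Ri) (ret_ntree Ri).
split.
  apply: (count_mu1 _ Ep); first by rewrite /is_VT Tj orbT.
  move=> u Hu Eu.
  have mui : m u vi = 1 by rewrite -(muk HN u Li) Eu Hli delta_k ?Hin // !inE eqxx orbT.
  have muj : m u vj = 1 by rewrite -(muk HN u Lj) Eu Hlj delta_k ?Hjn // !inE eqxx !orbT.
  have Hupi := upi u Hu.
  case/orP: Hu => Hu.
    rewrite !(m_leaf HN) // in mui muj.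
    by move: mui muj; case: (u =P vi) => // Ei; case: (u =P vj) => // Ej; rewrite -Ei -Ej eqxx in Hvij.
  have [c1 [c2 [Hc Cu]]] := tree_ch Hu.
  have uvi := neq_kind Hu (negbT (leaf_ntree Li)).
  have uvj := neq_kind Hu (negbT (leaf_ntree Lj)).
  have mup : m u pj = 1 by move: muj; rewrite mj (negbTE uvj).
  have muq : m u q = 0.
    by move: mui; rewrite mi mpi (negbTE uvi) (negbTE Hupi) mup; move: (m u q) => k; case: k.
  case: (eqVneq u pj) => // Hup.
  have key : forall c, A u c -> 0 < m c pj.
    move=> c Hc'; have [w Lw Hcw] := reach_leaf HN c.
    have Huw : connect A u w := connect_trans (connect1 Hc') Hcw.
    have := mu_leaf_in HN Eu Lw Huw; rewrite !inE -Hli -Hlj.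
    have /andP[Lw1 _] := labr HN Lw.
    have -> : (lab w == 0) = false by case: (lab w) Lw1.
    rewrite orFb; case/orP=> /eqP El.
      have Ew := lab_inj HN Lw Li El; subst w.
      move: Hcw; rewrite -(mpos HN) // mi; case: (eqVneq c vi) => [Ec|Ncv] /=.
        by subst c; move: Hc'; rewrite Pi (negbTE Hupi).
      rewrite mpi; case: (eqVneq c pi) => [Ec|Ncp] /=.
        subst c; move: Hc'; rewrite Qi (negbTE Hup) /= => /eqP Euq.
        by move: muq; rewrite Euq; have := connect0 A q; rewrite -(mpos HN) => H0 H1; rewrite H1 in H0.
      case: (posnP (m c q)) => [->|Hq0]; first by rewrite addn0.
      exfalso; move: Hq0; rewrite (mpos HN) => Hcq.
      have := connect_trans (connect1 Hc') Hcq; rewrite -(mpos HN) muq.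
      by [].
    have Ew := lab_inj HN Lw Lj El; subst w.
    move: Hcw; rewrite -(mpos HN) // mj; case: (eqVneq c vj) => [Ec|] //=.
    by subst c; move: Hc'; rewrite Pj (negbTE Hup).
  move: mup; rewrite (m_two HN pj Hc Cu) (negbTE Hup).
  have := key c1; have := key c2; rewrite !Cu !eqxx orbT orTb => K2 K1.
  move: (K1 isT) (K2 isT); move: (m c1 pj) (m c2 pj) => a b; clear; lia.
move=> x /in_mu_net [u Hu ->] Hxi Hxj.
have uvi : u != vi by apply: contraNneq Hxi => ->; rewrite mu_leaf // Hli.
have uvj : u != vj by apply: contraNneq Hxj => ->; rewrite mu_leaf // Hlj.
have Hupi := upi u Hu.
rewrite -Hli -Hlj !muk // mu0 mi mj (negbTE uvi) (negbTE uvj) /=.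
split; first exact: R_ge.
by rewrite mpi (negbTE Hupi) add0n leq_addr.
Qed.

Lemma S_split a b x d1 d2 : d1 != d2 -> (forall w, A x w = (w == d1) || (w == d2)) ->
  x != a -> x != b -> m x a + m x b = (m d1 a + m d1 b) + (m d2 a + m d2 b).
Proof.
move=> Hd Cx Hxa Hxb.
by rewrite !(m_two HN _ Hd Cx) (negbTE Hxa) (negbTE Hxb) !add0n addnACA.
Qed.

Lemma R_leaf v : is_leaf A v -> \sum_(h | is_ret A h) m v h = 0.
Proof.
move=> Lv; rewrite big1 // => h Rh; rewrite (m_leaf HN) //.
by case: eqP => // E; rewrite -E (leaf_nret Lv) in Rh.
Qed.

Lemma m_self x : 0 < m x x.
Proof. by rewrite (mpos HN) connect0. Qed.

Section Below.
Variables (u vi vj : V) (S : seq nat).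
Hypotheses (Eu : mu u = delta n S) (HS : forall k, k \in S -> (k == 0) || (k == i) || (k == j))
  (Li : is_leaf A vi) (Hli : lab vi = i) (Lj : is_leaf A vj) (Hlj : lab vj = j).

Lemma Spos x : connect A u x -> 0 < m x vi + m x vj.
Proof.
move=> Hx; have [w Lw Hxw] := reach_leaf HN x.
have := HS (mu_leaf_in HN Eu Lw (connect_trans Hx Hxw)).
have /andP[Lw1 _] := labr HN Lw.
have -> : (lab w == 0) = false by case: (lab w) Lw1.
rewrite orFb -Hli -Hlj.
case/orP => /eqP El.
  have Ew := lab_inj HN Lw Li El; subst w.
  by move: Hxw; rewrite -(mpos HN) => H; apply: ltn_addr.
have Ew := lab_inj HN Lw Lj El; subst w.
by move: Hxw; rewrite -(mpos HN) => H; apply: ltn_addl.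
Qed.

Lemma not_tree1 c : connect A u c -> m c vi + m c vj = 1 -> is_tree A c = false.
Proof.
move=> Hc Sc; apply/negbTE/negP => Tc.
have [d1 [d2 [Hd Cc]]] := tree_ch Tc.
have := S_split Hd Cc (neq_kind Tc (negbT (leaf_ntree Li))) (neq_kind Tc (negbT (leaf_ntree Lj))).
rewrite Sc.
have := Spos (connect_trans Hc (connect1 (_ : A c d1))); rewrite Cc eqxx => /(_ isT) H1.
have := Spos (connect_trans Hc (connect1 (_ : A c d2))); rewrite Cc eqxx orbT => /(_ isT) H2.
move: H1 H2; move: (m d1 vi + m d1 vj) (m d2 vi + m d2 vj) => a b; clear; lia.
Qed.

Lemma leaf_ij c : is_leaf A c -> m c vi + m c vj = 1 -> (c == vi) || (c == vj).
Proof. by move=> Lc; rewrite !(m_leaf HN) //; case: (c == vi); case: (c == vj). Qed.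

End Below.



Lemma dirC : ms_cherry (mu_net A lab n) i j -> net_cherry A lab i j.
Proof.
case=> Hc _.
have : delta n [:: i; j] \in mu_net A lab n by rewrite -has_pred1 has_count Hc.
case/in_mu_net => u Hu /esym Eu.
have mui' : mu u (inord i) = 1 by rewrite Eu delta_k ?Hin // inE eqxx.
have muj' : mu u (inord j) = 1 by rewrite Eu delta_k ?Hjn // !inE eqxx orbT.
have [vi Li Hli] : exists2 v, is_leaf A v & lab v = i.
  by apply: (leaf_of_mu (u := u) Hi); rewrite mui'.
have [vj Lj Hlj] : exists2 v, is_leaf A v & lab v = j.
  by apply: (leaf_of_mu (u := u) Hj); rewrite muj'.
have mui : m u vi = 1 by rewrite -(muk HN u Li) Hli.
have muj : m u vj = 1 by rewrite -(muk HN u Lj) Hlj.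
have Hvij : vi != vj by apply/eqP => E; move: Hij; rewrite -Hli -Hlj E eqxx.
have HS : forall k, k \in [:: i; j] -> (k == 0) || (k == i) || (k == j).
  by move=> k; rewrite !inE => /orP[] ->; rewrite ?orbT.
case/orP: Hu => Hu.
  rewrite !(m_leaf HN) // in mui muj.
  by move: mui muj; case: (u =P vi) => // Ei; case: (u =P vj) => // Ej; rewrite -Ei -Ej eqxx in Hvij.
have [c1 [c2 [Hc12 Cu]]] := tree_ch Hu.
have uvi := neq_kind Hu (negbT (leaf_ntree Li)).
have uvj := neq_kind Hu (negbT (leaf_ntree Lj)).
have mu0u : \sum_(h | is_ret A h) m u h = 0 by rewrite -(@mu0 _ A lab n) Eu delta_0 !inE Hi0 Hj0.
have noret : forall x, connect A u x -> is_ret A x = false.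
  move=> x Hx; apply/negbTE/negP => Rx; move: Hx; rewrite -(mpos HN) => Hx.
  by have := R_ge u Rx; rewrite mu0u leqn0 => /eqP E; rewrite E in Hx.
have Su := S_split Hc12 Cu uvi uvj; rewrite mui muj in Su.
have A1 : A u c1 by rewrite Cu eqxx.
have A2 : A u c2 by rewrite Cu eqxx orbT.
have P1 := Spos Eu HS Li Hli Lj Hlj (connect1 A1).
have P2 := Spos Eu HS Li Hli Lj Hlj (connect1 A2).
have [S1 S2] : m c1 vi + m c1 vj = 1 /\ m c2 vi + m c2 vj = 1.
  move: Su P1 P2; move: (m c1 vi + m c1 vj) (m c2 vi + m c2 vj) => a b; clear; lia.
have leafc : forall c, A u c -> m c vi + m c vj = 1 -> is_leaf A c.
  move=> c Ac Sc; case/or4P: (kinds HN c) => Hk //.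
  - by move: Ac; rewrite root_par.
  - by rewrite (not_tree1 Eu HS Li Hli Lj Hlj (connect1 Ac) Sc) in Hk.
  - by rewrite (noret _ (connect1 Ac)) in Hk.
have E1 := leaf_ij (leafc _ A1 S1) S1.
have E2 := leaf_ij (leafc _ A2 S2) S2.
exists vi, vj, u; split; first by [].
move: Hc12; rewrite !Cu.
case/orP: E1 => /eqP ->; case/orP: E2 => /eqP ->; rewrite ?eqxx //= => _;
  rewrite ?eqxx ?orbT //.
Qed.

Lemma bad u b vi vj : is_leaf A vi -> lab vi = i -> is_leaf A vj -> lab vj = j ->
  is_tree A u -> is_ret A b -> A u b -> A u vi -> A b vj ->
  (forall x, x \in mu_net A lab n -> x != delta n [:: i] -> x != delta n [:: j] ->
    x (inord i) <= x ord0 /\ x (inord j) <= x (inord i)) -> False.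
Proof.
move=> Li Hli Lj Hlj Tu Rb Aub Auvi Abvj Hcond.
have [q [Huq Qb]] := pred2_fix (ret_par Rb) Aub.
have Pi := pred1_fix (leaf_par Li) Auvi.
have Pj := pred1_fix (leaf_par Lj) Abvj.
have [rt Hrt] := mycard1P (root1 HN).
have Rrt : is_root A rt by rewrite Hrt.
have [r Cr] := root_ch Rrt.
have Arr : A rt r by rewrite Cr.
have below : forall y, y != rt -> connect A r y.
  move=> y Hy; have Hry : rt != y by rewrite eq_sym.
  have [c Ac Hcy] := conn_step (root_conn HN y Rrt) Hry.
  by move: Ac; rewrite Cr => /eqP <-.
have urt : u != rt by apply/eqP => E; move: Rrt; rewrite -E (tree_nroot Tu).
have Aqb : A q b by rewrite Qb eqxx orbT.
have qrt : q != rt.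
  apply/eqP => E; subst q; move: Aqb; rewrite Cr => /eqP Er.
  have := below u urt; rewrite -Er => Hbu.
  by move/negP: (acyc HN Aub).
have Hrq : connect A r q := below q qrt.
have rVT : is_VT A r.
  case/or4P: (kinds HN r) => Hk; rewrite /is_VT ?Hk ?orbT //.
    by move: Arr; rewrite root_par.
  have [p' [Hp' Pr]] := pred2_fix (ret_par Hk) Arr.
  have Apr : A p' r by rewrite Pr eqxx orbT.
  by exfalso; move/negP: (acyc HN Apr); apply; apply: below; rewrite eq_sym.
have rvi : r != vi.
  apply/eqP => E; subst r; have Eq := conn_leaf HN Li Hrq; subst q.
  by rewrite (leaf_out b Li) in Aqb.
have rvj : r != vj.
  apply/eqP => E; subst r; have Eq := conn_leaf HN Lj Hrq; subst q.
  by rewrite (leaf_out b Lj) in Aqb.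
have rb : r != b by apply/eqP => E; move: rVT; rewrite E /is_VT (ret_nleaf Rb) (ret_ntree Rb).
have mj : m r vj = m r u + m r q.
  by rewrite (mr_one HN r Pj) (negbTE rvj) (mr_two HN r Huq Qb) (negbTE rb) !add0n.
have mi : m r vi = m r u by rewrite (mr_one HN r Pi) (negbTE rvi) add0n.
have mq : 0 < m r q by rewrite (mpos HN).
have mb : 0 < m r b by rewrite (mpos HN); apply: connect_trans Hrq (connect1 Aqb).
have Hji : (j == i) = false by rewrite eq_sym (negbTE Hij).
have Hxi : mu r != delta n [:: i].
  apply/eqP => E; have := congr1 (fun f : {ffun 'I_n.+1 -> nat} => f (inord j)) E.
  rewrite /= -{1}Hlj (muk HN r Lj) delta_k ?Hjn // inE Hji mj.
  by move: mq; move: (m r u) (m r q) => a c; clear; lia.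
have Hxj : mu r != delta n [:: j].
  apply/eqP => E; have := congr1 (fun f : {ffun 'I_n.+1 -> nat} => f ord0) E.
  rewrite /= mu0 delta_0 inE Hj0 => H0.
  by have := R_ge r Rb; rewrite H0 leqn0 => /eqP E0; rewrite E0 in mb.
have [_] := Hcond _ (mu_in_net lab n rVT) Hxi Hxj.
rewrite -Hli -Hlj !(muk HN r) // mi mj.
by move: mq; move: (m r u) (m r q) => a c; clear; lia.
Qed.

Lemma dirD : ms_ret_cherry (mu_net A lab n) i j -> net_reducible A lab i j.
Proof.
case=> Hc Hcond.
have : delta n [:: 0; i; j] \in mu_net A lab n by rewrite -has_pred1 has_count Hc.
case/in_mu_net => u Hu /esym Eu.
have mui' : mu u (inord i) = 1 by rewrite Eu delta_k ?Hin // !inE eqxx orbT.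
have muj' : mu u (inord j) = 1 by rewrite Eu delta_k ?Hjn // !inE eqxx !orbT.
have [vi Li Hli] : exists2 v, is_leaf A v & lab v = i.
  by apply: (leaf_of_mu (u := u) Hi); rewrite mui'.
have [vj Lj Hlj] : exists2 v, is_leaf A v & lab v = j.
  by apply: (leaf_of_mu (u := u) Hj); rewrite muj'.
have mui : m u vi = 1 by rewrite -(muk HN u Li) Hli.
have muj : m u vj = 1 by rewrite -(muk HN u Lj) Hlj.
have Hvij : vi != vj by apply/eqP => E; move: Hij; rewrite -Hli -Hlj E eqxx.
have HS : forall k, k \in [:: 0; i; j] -> (k == 0) || (k == i) || (k == j).
  by move=> k; rewrite !inE orbA.
case/orP: Hu => Hu.
  rewrite !(m_leaf HN) // in mui muj.
  by move: mui muj; case: (u =P vi) => // Ei; case: (u =P vj) => // Ej; rewrite -Ei -Ej eqxx in Hvij.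
have [c1 [c2 [Hc12 Cu]]] := tree_ch Hu.
have uvi := neq_kind Hu (negbT (leaf_ntree Li)).
have uvj := neq_kind Hu (negbT (leaf_ntree Lj)).
have mu0u : \sum_(h | is_ret A h) m u h = 1 by rewrite -(@mu0 _ A lab n) Eu delta_0 !inE eqxx.
have Su := S_split Hc12 Cu uvi uvj; rewrite mui muj in Su.
have A1 : A u c1 by rewrite Cu eqxx.
have A2 : A u c2 by rewrite Cu eqxx orbT.
have P1 := Spos Eu HS Li Hli Lj Hlj (connect1 A1).
have P2 := Spos Eu HS Li Hli Lj Hlj (connect1 A2).
have [S1 S2] : m c1 vi + m c1 vj = 1 /\ m c2 vi + m c2 vj = 1.
  move: Su P1 P2; move: (m c1 vi + m c1 vj) (m c2 vi + m c2 vj) => a b; clear; lia.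
have kindc : forall c, connect A u c -> ~~ is_root A c -> m c vi + m c vj = 1 ->
    is_leaf A c || is_ret A c.
  move=> c Ac Nr Sc; case/or4P: (kinds HN c) => Hk; rewrite ?Hk ?orbT //.
    by rewrite Hk in Nr.
  by rewrite (not_tree1 Eu HS Li Hli Lj Hlj Ac Sc) in Hk.
have Ru : \sum_(h | is_ret A h) m c1 h + \sum_(h | is_ret A h) m c2 h = 1.
  by move: mu0u; rewrite (R_split (fun h => m_two HN h Hc12 Cu)) (tree_nret Hu).
have Rself : forall c, is_ret A c -> 0 < \sum_(h | is_ret A h) m c h.
  by move=> c Rc; apply: leq_trans (m_self c) (R_ge c Rc).
have nroot : forall c, A u c -> ~~ is_root A c.
  by move=> c Ac; apply/negP => Rc; move: Ac; rewrite root_par.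
suff H : forall a b, A u a -> A u b -> a != b -> is_leaf A a -> is_ret A b ->
    m a vi + m a vj = 1 -> m b vi + m b vj = 1 ->
    \sum_(h | is_ret A h) m b h = 1 -> net_reducible A lab i j.
  case/orP: (kindc c1 (connect1 A1) (nroot _ A1) S1) => K1;
  case/orP: (kindc c2 (connect1 A2) (nroot _ A2) S2) => K2.
  - by move: Ru; rewrite !R_leaf.
  - by apply: (H c1 c2) => //; move: Ru; rewrite R_leaf.
  - by apply: (H c2 c1) => //; [rewrite eq_sym | move: Ru; rewrite (R_leaf K2) addn0].
  - have := Rself _ K1; have := Rself _ K2; move: Ru.
    move: (\sum_(h | is_ret A h) m c1 h) (\sum_(h | is_ret A h) m c2 h) => a b; clear; lia.
move=> a b Aa Ab Hab La Rb Sa Sb Rb1.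
have [e Ce] := ret_ch Rb.
have Abe : A b e by rewrite Ce.
have mbe : forall w, m b w = (b == w) + m e w := fun w => m_one HN w Ce.
have Re0 : \sum_(h | is_ret A h) m e h = 0 by move: Rb1; rewrite (R_one mbe) Rb => -[].
have bvi : b != vi by apply/eqP => E; rewrite E (leaf_nret Li) in Rb.
have bvj : b != vj by apply/eqP => E; rewrite E (leaf_nret Lj) in Rb.
have Se : m e vi + m e vj = 1 by move: Sb; rewrite !mbe (negbTE bvi) (negbTE bvj).
have Hue : connect A u e := connect_trans (connect1 Ab) (connect1 Abe).
have Le : is_leaf A e.
  have Nre : ~~ is_root A e by apply/negP => Rte; move: Abe; rewrite root_par.
  case/orP: (kindc e Hue Nre Se) => // Re.
  by move: Re0; have := Rself _ Re; move=> H0 H1; rewrite H1 in H0.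
have Ea := leaf_ij La Sa.
have Ee := leaf_ij Le Se.
have Hae : a != e.
  apply/eqP => E; subst e.
  have [p Pp] := leaf_par La.
  move: Aa Abe; rewrite !Pp => /eqP Eup /eqP Ebp.
  by move: Rb; rewrite Ebp -Eup (tree_nret Hu).
case/orP: Ea => /eqP Ea; case/orP: Ee => /eqP Ee; subst a e.
- by rewrite eqxx in Hae.
- by exfalso; apply: (bad Li Hli Lj Hlj Hu Rb Ab Aa Abe Hcond).
- right; exists vi, vj, b, u; split; first by [].
  by split.
- by rewrite eqxx in Hae.
Qed.

Theorem main_iff : net_reducible A lab i j <-> ms_reducible (mu_net A lab n) i j.
Proof.
split.
  by case=> H; [left; apply: dirA | right; apply: dirB].
by case=> H; [left; apply: dirC | apply: dirD].
Qed.

End Main.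

Theorem mainTheorem6 (n : nat) (V : finType) (A : rel V) (lab : V -> nat)
  (HN : is_network A lab n) (i j : nat)
  (Hi : 1 <= i <= n) (Hj : 1 <= j <= n) (Hij : i != j) :
  net_reducible A lab i j <-> ms_reducible (mu_net A lab n) i j.
Proof. exact: (main_iff HN Hi Hj Hij). Qed.
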